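(* Fix a positive integer $n$ and form the graph whose vertices are the unordered tuples (multisets) of powers of $2$ with sum $n$, with an edge between a tuple $\lambda$ of length $\ell$ and a tuple $\mu$ of length $\ell-1$ whenever $\mu$ is obtained from $\lambda$ by replacing exactly two entries of $\lambda$ by their sum. Then for every $\ell$, the subgraph induced on all vertices of length $\ell$ and $\ell-1$ is connected; in particular any two tuples of length $\ell$ are joined by a path in this subgraph. *)

(* Defs.v *)
From mathcomp Require Import all_boot.
From Stdlib Require Import Relations.
Set Implicit Arguments. Unset Strict Implicit. Unset Printing Implicit Defensive.

Definition is_pow2 (x : nat) : Prop := exists k : nat, x = 2 ^ k.

(* A vertex: an unordered tuple (multiset) of powers of 2 with sum n,
   represented canonically by its nondecreasingly sorted list of entries. *)
Definition is_vertex (n : nat) (s : seq nat) : Prop :=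
  sorted leq s /\ (forall x, x \in s -> is_pow2 x) /\ sumn s = n.

Definition merge_step (lam mu : seq nat) : Prop :=
  exists (a b : nat) (rest : seq nat),
    perm_eq lam [:: a, b & rest] /\ perm_eq mu ((a + b) :: rest).

(* The graph: edge between lam (length l) and mu (length l-1) when mu is a merge of lam;
   merge_step automatically forces size mu = (size lam).-1. *)
Definition adjacent (n : nat) (x y : seq nat) : Prop :=
  is_vertex n x /\ is_vertex n y /\ (merge_step x y \/ merge_step y x).

Definition in_layer (n l : nat) (s : seq nat) : Prop :=
  is_vertex n s /\ (size s = l \/ size s = l.-1).

Definition layer_adj (n l : nat) (x y : seq nat) : Prop :=
  in_layer n l x /\ in_layer n l y /\ adjacent n x y.

(* Main.v *)
Require Import Defs.
From mathcomp Require Import all_boot.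
From Stdlib Require Import Relations.
From mathcomp Require Import zify.

Module Helpers.
Set Implicit Arguments. Unset Strict Implicit.

Definition vtx (n : nat) (s : seq nat) : Prop :=
  (forall x, x \in s -> is_pow2 x) /\ sumn s = n.

Lemma sort_perm (s t : seq nat) : perm_eq s t -> sort leq s = sort leq t.
Proof. move=> h; apply/perm_sortP => //; [exact: leq_total|exact: leq_trans|exact: anti_leq]. Qed.

Lemma ps (s : seq nat) : perm_eq (sort leq s) s.
Proof. by rewrite perm_sort perm_refl. Qed.

Lemma vertex_sort n s : vtx n s -> is_vertex n (sort leq s).
Proof.
move=> [h1 h2]; split; first exact: (sort_sorted leq_total).
split; first by move=> x; rewrite mem_sort; exact: h1.
by rewrite (perm_sumn (ps s)).
Qed.

Lemma vertex_vtx n s : is_vertex n s -> vtx n s.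
Proof. by move=> [_ [h1 h2]]. Qed.

Lemma sort_vertex n s : is_vertex n s -> sort leq s = s.
Proof. by move=> [h _]; apply: sorted_sort => //; exact: leq_trans. Qed.

Lemma ms_perm s s' t t' : perm_eq s s' -> perm_eq t t' -> merge_step s t -> merge_step s' t'.
Proof.
move=> hs ht [a [b [r [h1 h2]]]]; exists a, b, r; split.
- by apply: perm_trans h1; rewrite perm_sym.
- by apply: perm_trans h2; rewrite perm_sym.
Qed.

Lemma crt_sym n l u v : clos_refl_trans _ (layer_adj n l) u v -> clos_refl_trans _ (layer_adj n l) v u.
Proof.
elim=> [x y [h1 [h2 [h3 [h4 h5]]]]| x | x y z _ h1 _ h2].
- apply: rt_step; do !split => //; tauto.
- exact: rt_refl.
- exact: rt_trans h2 h1.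
Qed.

Lemma crt_map (R S : relation (seq nat)) f a b : (forall x y, R x y -> S (f x) (f y)) ->
  clos_refl_trans _ R a b -> clos_refl_trans _ S (f a) (f b).
Proof.
move=> hf; elim=> [x y h| x | x y z _ h1 _ h2].
- exact: rt_step (hf _ _ h).
- exact: rt_refl.
- exact: rt_trans h1 h2.
Qed.

Lemma pow2_pos x : is_pow2 x -> 0 < x.
Proof. by move=> [k ->]; rewrite expn_gt0. Qed.

Lemma ms_add x s t : merge_step s t -> merge_step (sort leq (x :: s)) (sort leq (x :: t)).
Proof.
move=> [a [b [r [h1 h2]]]]; exists a, b, (x :: r); split.
- apply: perm_trans (ps _) _.
  apply: perm_trans (_ : perm_eq _ (x :: [:: a, b & r])) _; first by rewrite perm_cons.
  by rewrite -[x :: _]/([:: x] ++ [:: a; b] ++ r) perm_catCA.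
- apply: perm_trans (ps _) _.
  apply: perm_trans (_ : perm_eq _ (x :: ((a + b) :: r))) _; first by rewrite perm_cons.
  by rewrite -[x :: _]/([:: x] ++ [:: a + b] ++ r) perm_catCA.
Qed.

Lemma layer_add x m l s : is_pow2 x -> 2 <= l -> in_layer m l.-1 s -> in_layer (m + x) l (sort leq (x :: s)).
Proof.
move=> hx hl [hv hs]; split.
- apply: vertex_sort; case: (vertex_vtx hv) => h1 h2; split.
  + by move=> y; rewrite inE => /orP [/eqP ->|]; [|exact: h1].
  + by rewrite /= h2 addnC.
- rewrite size_sort /=; case: hs => ->; lia.
Qed.

Lemma adj_add x m l s t : is_pow2 x -> 2 <= l -> layer_adj m l.-1 s t ->
  layer_adj (m + x) l (sort leq (x :: s)) (sort leq (x :: t)).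
Proof.
move=> hx hl [h1 [h2 [_ [_ h3]]]].
have h1' := layer_add hx hl h1; have h2' := layer_add hx hl h2.
do !split; try tauto; try apply h1'; try apply h2'.
by case: h3 => h; [left|right]; apply: ms_add.
Qed.

Definition dbl (s : seq nat) := sort leq (map (muln 2) s).

Lemma ms_dbl s t : merge_step s t -> merge_step (dbl s) (dbl t).
Proof.
move=> [a [b [r [h1 h2]]]]; exists (2 * a), (2 * b), (map (muln 2) r); split.
- by apply: perm_trans (ps _) _; exact: (perm_map (muln 2) h1).
- apply: perm_trans (ps _) _; rewrite -mulnDr; exact: (perm_map (muln 2) h2).
Qed.

Lemma layer_dbl m l s : in_layer m l s -> in_layer (2 * m) l (dbl s).
Proof.
move=> [hv hs]; split.
- apply: vertex_sort; case: (vertex_vtx hv) => h1 h2; split.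
  + move=> y /mapP [z /h1 [k ->] ->]; exists k.+1; by rewrite expnS.
  + rewrite -h2; elim: (s) => //= a r ->; lia.
- by rewrite size_sort size_map.
Qed.

Lemma adj_dbl m l s t : layer_adj m l s t -> layer_adj (2 * m) l (dbl s) (dbl t).
Proof.
move=> [h1 [h2 [_ [_ h3]]]].
have h1' := layer_dbl h1; have h2' := layer_dbl h2.
do !split; try tauto; try apply h1'; try apply h2'.
by case: h3 => h; [left|right]; apply: ms_dbl.
Qed.

Definition P n := forall l, 1 <= l -> forall u v, in_layer n l u -> in_layer n l v ->
  clos_refl_trans _ (layer_adj n l) u v.

Lemma rem_sum x (u : seq nat) : x \in u -> sumn u = x + sumn (rem x u).
Proof. by move=> h; rewrite (perm_sumn (perm_to_rem h)). Qed.

Lemma sum_pos_nil (s : seq nat) : (forall y, y \in s -> 0 < y) -> sumn s = 0 -> s = [::].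
Proof. case: s => //= a r h; have := h a (mem_head _ _); lia. Qed.

Lemma vtx_rem n x u : vtx n u -> x \in u -> vtx (n - x) (rem x u).
Proof.
move=> [h1 h2] hx; split; first by move=> y /mem_rem; exact: h1.
rewrite -h2 (rem_sum hx); lia.
Qed.

Lemma back x u n : is_vertex n u -> x \in u -> sort leq (x :: sort leq (rem x u)) = u.
Proof.
move=> hv hx; rewrite -{2}(sort_vertex hv); apply: sort_perm.
apply: perm_trans (_ : perm_eq _ (x :: rem x u)) _; first by rewrite perm_cons ps.
by rewrite perm_sym perm_to_rem.
Qed.

Lemma single n x u : is_vertex n u -> x \in u -> x = n -> u = [:: x].
Proof.
move=> hv hx hxn; case: (vertex_vtx hv) => h1 h2.
have hr : rem x u = [::].
  apply: sum_pos_nil; first by move=> y /mem_rem /h1; exact: pow2_pos.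
  have := rem_sum hx; lia.
by rewrite -(back hv hx) hr.
Qed.

Lemma common n l x u v : 0 < n -> 1 <= l -> (forall m, 0 < m < n -> P m) ->
  in_layer n l u -> in_layer n l v -> x \in u -> x \in v ->
  clos_refl_trans _ (layer_adj n l) u v.
Proof.
move=> hn hl IH hu hv hxu hxv.
have hx : is_pow2 x by apply: (proj1 (vertex_vtx (proj1 hu))).
have hxn : x <= n by rewrite -(proj2 (vertex_vtx (proj1 hu))) (rem_sum hxu) leq_addr.
case: (eqVneq x n) => [e|ne].
  by rewrite (single (proj1 hu) hxu e) (single (proj1 hv) hxv e); exact: rt_refl.
have hsz : forall w, in_layer n l w -> x \in w -> 2 <= size w.
  move=> w [hw _] hxw; have := rem_sum hxw; rewrite (proj2 (vertex_vtx hw)) => e.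
  have : rem x w != [::] by apply/eqP => hr; rewrite hr /= in e; lia.
  rewrite (perm_size (perm_to_rem hxw)) /=; case: (rem x w) => //.
have hl2 : 2 <= l.
  by have := hsz _ hu hxu; case: (hu) => _ [] e; rewrite e //; lia.
have lay : forall w, in_layer n l w -> x \in w -> in_layer (n - x) l.-1 (sort leq (rem x w)).
  move=> w [hw hs] hxw; split; first by apply: vertex_sort; apply: vtx_rem => //; exact: vertex_vtx.
  rewrite size_sort size_rem //; case: hs => ->; lia.
have hx0 := pow2_pos hx.
have hxn' : x < n by rewrite ltn_neqAle ne.
have := IH (n - x) ltac:(lia) l.-1 ltac:(lia) _ _ (lay _ hu hxu) (lay _ hv hxv).
move/(crt_map (f := fun s => sort leq (x :: s)) (S := layer_adj (n - x + x) l)).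
rewrite (back (proj1 hu) hxu) (back (proj1 hv) hxv) subnK //; apply.
by move=> a b h; have := adj_add hx hl2 h; rewrite subnK.
Qed.

Lemma mem_tl (a y : nat) (r : seq nat) : y \in r -> y \in a :: r.
Proof. by move=> h; rewrite inE h orbT. Qed.

Lemma pow2_half y : is_pow2 y -> y != 1 -> is_pow2 (y %/ 2) /\ y = 2 * (y %/ 2).
Proof.
case=> [[|k] ->] //= _; split; first by exists k; rewrite expnS mulKn.
by rewrite expnS mulKn.
Qed.

Definition hv (s : seq nat) := map (fun y => y %/ 2) s.

Lemma halve_vtx n u : vtx n u -> 1 \notin u ->
  vtx (n %/ 2) (hv u) /\ map (muln 2) (hv u) = u /\ n = 2 * (n %/ 2).
Proof.
move=> [h1 h2] h1u.
have H : forall y, y \in u -> is_pow2 (y %/ 2) /\ y = 2 * (y %/ 2).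
  by move=> y hy; apply: pow2_half; [exact: h1| apply: contraNneq h1u => <-].
have hs : sumn u = 2 * sumn (hv u) /\ map (muln 2) (hv u) = u.
  elim: (u) H => //= a r IH H'.
  have [IH1 IH2] := IH (fun y hy => H' y (mem_tl a hy)).
  have [_ ea] := H' a (mem_head _ _).
  by rewrite IH1 IH2 -ea; split => //; lia.
case: hs => hs1 hs2; rewrite -h2 hs1 mulKn //; split => //; split => //.
by move=> y /mapP [z hz ->]; case: (H z hz).
Qed.

Lemma split1 (s : seq nat) : sumn s = count_mem 1 s + sumn (filter (predC1 1) s) /\
  size s = count_mem 1 s + size (filter (predC1 1) s) /\ (1 \in s -> 0 < count_mem 1 s).
Proof.
elim: s => //= a r [IH1 [IH2 IH3]]; case: (eqVneq a 1) => [->|ne] /=.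
- by rewrite IH1 IH2; split; [lia|split; [lia|]].
- rewrite IH1 IH2 inE eq_sym (negPf ne) /=; split; [lia|split; [lia|by rewrite add0n]].
Qed.

Lemma size_le_sum (s : seq nat) : (forall y, y \in s -> 0 < y) -> size s <= sumn s.
Proof.
elim: s => //= a r IH H; have := H a (mem_head _ _).
have := IH (fun y hy => H y (mem_tl a hy)); lia.
Qed.

Lemma sum_le_size (s : seq nat) : (forall y, y \in s -> y <= 1) -> sumn s <= size s.
Proof.
elim: s => //= a r IH H; have := H a (mem_head _ _).
have := IH (fun y hy => H y (mem_tl a hy)); lia.
Qed.

Lemma grow N d s : vtx N s -> 1 \in s -> size s + d <= N ->
  exists s', vtx N s' /\ 1 \in s' /\ size s' = size s + d.
Proof.
elim: d s => [|d IH] s hv h1 hle; first by exists s; rewrite addn0.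
case: (boolP (has (fun y => 1 < y) s)) => [/hasP [y hy hy1]|/hasPn hn]; last first.
  exfalso; have : sumn s <= size s.
    by apply: sum_le_size => y0 hy0; have := hn y0 hy0; rewrite /= -leqNgt.
  case: hv => _ ->; lia.
case: (hv) => h1s h2s.
have [[|j] ey] := h1s y hy; first by rewrite ey in hy1.
set s1 := 2 ^ j :: 2 ^ j :: rem y s.
have hv1 : vtx N s1.
  split.
  - move=> z; rewrite !inE => /orP [/eqP ->|/orP [/eqP ->|/mem_rem hz]]; try by exists j.
    exact: h1s.
  - rewrite /= -h2s (rem_sum hy) ey expnS; lia.
have h11 : 1 \in s1.
  by rewrite /s1 !inE; apply/orP; right; apply/orP; right; apply: rem_mem => //; rewrite neq_ltn hy1.
have hsz : size s1 = (size s).+1.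
  by rewrite /= size_rem //; case: (s) hy => //.
have [s' [h1' [h2' h3']]] := IH s1 hv1 h11 ltac:(lia).
by exists s'; split => //; split => //; rewrite h3' hsz addSnnS.
Qed.

Lemma mixed n l u v : 0 < n -> 1 <= l -> n = 2 * (n %/ 2) -> (forall m, 0 < m < n -> P m) ->
  in_layer n l u -> in_layer n l v -> 1 \notin u -> 1 \in v ->
  clos_refl_trans _ (layer_adj n l) u v.
Proof.
move=> hn hl hev IH hu hvv h1u h1v.
have [hvu [hmu _]] := halve_vtx (vertex_vtx (proj1 hu)) h1u.
case: (vertex_vtx (proj1 hvv)) => hv1 hv2.
have [S1 [S2 S3]] := split1 v.
set c := count_mem 1 v in S1 S2 S3; set R := filter (predC1 1) v in S1 S2.
have hR : forall y, y \in R -> is_pow2 y.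
  by move=> y; rewrite mem_filter => /andP [_ /hv1].
have hR1 : 1 \notin R.
  by rewrite mem_filter.
have [hvR [hmR hR2]] := halve_vtx (n := sumn R) (conj hR erefl) hR1.
have hc1 := S3 h1v.
have hsv : size v <= l by case: hvv => _ [] ->; lia.
have hsu : l.-1 <= size u by case: hu => _ [] ->; lia.
have hsu2 : size u <= n %/ 2.
  have := size_le_sum (s := hv u) (fun y hy => pow2_pos (proj1 hvu y hy)).
  by rewrite size_map (proj2 hvu).
set z0 := nseq (c %/ 2) 1 ++ hv R.
have hz0 : vtx (n %/ 2) z0.
  split.
  - move=> y; rewrite mem_cat => /orP [/nseqP [-> _]|hy]; first by exists 0.
    exact: (proj1 hvR).
  - rewrite sumn_cat sumn_nseq (proj2 hvR); lia.
have h1z0 : 1 \in z0 by rewrite mem_cat mem_nseq eqxx andbT; apply/orP; left; lia.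
have hsz0 : size z0 = c %/ 2 + size R by rewrite size_cat size_nseq size_map.
have [z1 [hz1 [h1z1 sz1]]] := grow (d := l.-1 - size z0) hz0 h1z0 ltac:(lia).
have e : 2 * (n %/ 2) = n by lia.
have hl2 : 2 <= l by lia.
set z := dbl (sort leq z1).
have hzl : in_layer n l z.
  have := layer_dbl (m := n %/ 2) (l := l) (s := sort leq z1).
  rewrite e; apply; split; first exact: vertex_sort.
  rewrite size_sort sz1; lia.
have path1 : clos_refl_trans _ (layer_adj n l) u z.
  have hul : in_layer (n %/ 2) l (sort leq (hv u)).
    split; first exact: vertex_sort.
    by rewrite size_sort size_map; case: hu.
  have hzl' : in_layer (n %/ 2) l (sort leq z1).
    split; first exact: vertex_sort.
    rewrite size_sort sz1; lia.
  have := IH (n %/ 2) ltac:(lia) l hl _ _ hul hzl'.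
  move/(crt_map (f := dbl) (S := layer_adj (2 * (n %/ 2)) l)).
  have -> : dbl (sort leq (hv u)) = u.
    rewrite /dbl -{2}(sort_vertex (proj1 hu)) -{2}hmu; apply: sort_perm.
    exact: perm_map (ps _).
  rewrite e; apply => a b h; have := adj_dbl h; rewrite e; exact: id.
have h2z : 2 \in z by rewrite /dbl mem_sort; apply/mapP; exists 1; rewrite ?mem_sort.
set z' := sort leq (1 :: 1 :: rem 2 z).
have hz'l : in_layer n l z'.
  split.
  - apply: vertex_sort; case: (vertex_vtx (proj1 hzl)) => hz1' hz2'; split.
    + move=> y; rewrite !inE => /orP [/eqP ->|/orP [/eqP ->|/mem_rem hy]]; try by exists 0.
      exact: hz1'.
    + by rewrite /= -hz2' (rem_sum h2z).
  - left; rewrite size_sort /= size_rem // /z /dbl size_sort size_map size_sort sz1; lia.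
have edge : layer_adj n l z z'.
  split => //; split => //; split; first by case: hzl.
  split; first by case: hz'l.
  right; exists 1, 1, (rem 2 z); split; first exact: ps.
  exact: perm_to_rem.
apply: (rt_trans _ _ _ _ _ path1 (rt_trans _ _ _ _ _ (rt_step _ _ _ _ edge) _)).
apply: (common (x := 1)) => //.
by rewrite /z' mem_sort inE eqxx.
Qed.

Lemma dbl_hv n u : is_vertex n u -> map (muln 2) (hv u) = u -> dbl (sort leq (hv u)) = u.
Proof.
move=> hu hmu; rewrite /dbl -{2}(sort_vertex hu) -{2}hmu; apply: sort_perm.
exact: perm_map (ps _).
Qed.

Lemma evens n l u v : 0 < n -> 1 <= l -> (forall m, 0 < m < n -> P m) ->
  in_layer n l u -> in_layer n l v -> 1 \notin u -> 1 \notin v ->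
  clos_refl_trans _ (layer_adj n l) u v.
Proof.
move=> hn hl IH hu hvv h1u h1v.
have [hvu [hmu hn2]] := halve_vtx (vertex_vtx (proj1 hu)) h1u.
have [hvv' [hmv _]] := halve_vtx (vertex_vtx (proj1 hvv)) h1v.
have hul : forall w, in_layer n l w -> vtx (n %/ 2) (hv w) -> in_layer (n %/ 2) l (sort leq (hv w)).
  move=> w hw hvw; split; first exact: vertex_sort.
  by rewrite size_sort size_map; case: hw.
have := IH (n %/ 2) ltac:(lia) l hl _ _ (hul _ hu hvu) (hul _ hvv hvv').
move/(crt_map (f := dbl) (S := layer_adj (2 * (n %/ 2)) l)).
rewrite (dbl_hv (proj1 hu) hmu) (dbl_hv (proj1 hvv) hmv) -hn2; apply => a b h.
by have := adj_dbl h; rewrite -hn2.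
Qed.

Lemma mainP n : 0 < n -> P n.
Proof.
elim/ltn_ind: n => n IH hn l hl u v hu hv.
have IH' : forall m, 0 < m < n -> P m by move=> m /andP [h1 h2]; exact: IH.
case: (boolP (1 \in u)) => h1u; case: (boolP (1 \in v)) => h1v.
- exact: (common (x := 1)).
- have hn2 : n = 2 * (n %/ 2) by case: (halve_vtx (vertex_vtx (proj1 hv)) h1v) => _ [_].
  exact: crt_sym (mixed hn hl hn2 IH' hv hu h1v h1u) => _ [_].
- have hn2 : n = 2 * (n %/ 2) by case: (halve_vtx (vertex_vtx (proj1 hu)) h1u) => _ [_].
  exact: (mixed hn hl hn2 IH' hu hv h1u h1v) => _ [_].
- exact: evens.
Qed.
End Helpers.

Theorem mainTheorem11 (n : nat) (hn : 0 < n) (l : nat) (hl : 1 <= l) :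
  forall u v : seq nat, in_layer n l u -> in_layer n l v ->
    clos_refl_trans (seq nat) (layer_adj n l) u v.
Proof. exact: (Helpers.mainP hn hl). Qed.
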